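(* For norm-one $a,b\in\mathbb{O}$, the algebras ${}^*\mathbb{O}_l(a,1)$ and ${}^*\mathbb{O}_l(b,1)$ are isomorphic if and only if $|\mathrm{Re}(a)|=|\mathrm{Re}(b)|$.
   Context: $\mathbb{O}$ is the real octonion algebra; $\mathrm{Re}(a)$ is the real part of $a$ (its component along $1$ in $\mathbb{O}=\mathbb{R}\oplus\mathrm{Im}(\mathbb{O})$), and $\bar x$ is conjugation. For norm-one $a$, ${}^*\mathbb{O}_l(a,1)$ is the normed space of $\mathbb{O}$ with product $x\odot y=(\bar x a)y$. *)

(* Defs.v *)
From HB Require Import structures.
From mathcomp Require Import all_boot all_order all_algebra.
From mathcomp Require Import reals.
Set Implicit Arguments. Unset Strict Implicit. Unset Printing Implicit Defensive.
Import Order.TTheory GRing.Theory Num.Theory.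
Local Open Scope ring_scope.

Section Octonions.
Variable R : realType.

(* Quaternions: q0 + q1 i + q2 j + q3 k *)
Record quat := Quat { q0 : R; q1 : R; q2 : R; q3 : R }.

Definition qadd (a b : quat) : quat :=
  Quat (q0 a + q0 b) (q1 a + q1 b) (q2 a + q2 b) (q3 a + q3 b).
Definition qopp (a : quat) : quat := Quat (- q0 a) (- q1 a) (- q2 a) (- q3 a).
Definition qscale (r : R) (a : quat) : quat :=
  Quat (r * q0 a) (r * q1 a) (r * q2 a) (r * q3 a).
Definition qconj (a : quat) : quat := Quat (q0 a) (- q1 a) (- q2 a) (- q3 a).
Definition qmul (a b : quat) : quat :=
  Quat (q0 a * q0 b - q1 a * q1 b - q2 a * q2 b - q3 a * q3 b)
       (q0 a * q1 b + q1 a * q0 b + q2 a * q3 b - q3 a * q2 b)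
       (q0 a * q2 b - q1 a * q3 b + q2 a * q0 b + q3 a * q1 b)
       (q0 a * q3 b + q1 a * q2 b - q2 a * q1 b + q3 a * q0 b).
Definition qnorm2 (a : quat) : R := q0 a ^+ 2 + q1 a ^+ 2 + q2 a ^+ 2 + q3 a ^+ 2.

(* Octonions as pairs (a, b) of quaternions, Cayley-Dickson:
   (a,b)(c,d) = (ac - conj(d) b, d a + b conj(c)),  conj(a,b) = (conj a, -b). *)
Record oct := Oct { o1 : quat; o2 : quat }.

Definition oadd (x y : oct) : oct := Oct (qadd (o1 x) (o1 y)) (qadd (o2 x) (o2 y)).
Definition oscale (r : R) (x : oct) : oct := Oct (qscale r (o1 x)) (qscale r (o2 x)).
Definition oconj (x : oct) : oct := Oct (qconj (o1 x)) (qopp (o2 x)).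
Definition omul (x y : oct) : oct :=
  Oct (qadd (qmul (o1 x) (o1 y)) (qopp (qmul (qconj (o2 y)) (o2 x))))
      (qadd (qmul (o2 y) (o1 x)) (qmul (o2 x) (qconj (o1 y)))).

Definition oRe (x : oct) : R := q0 (o1 x).
Definition onorm2 (x : oct) : R := qnorm2 (o1 x) + qnorm2 (o2 x).

(* The product of *O_l(a,1):  x (.) y = (conj(x) a) y *)
Definition lstar (a x y : oct) : oct := omul (omul (oconj x) a) y.

Definition lstar_isomorphic (a b : oct) : Prop :=
  exists f : oct -> oct,
    bijective f /\
    (forall x y, f (oadd x y) = oadd (f x) (f y)) /\
    (forall (r : R) x, f (oscale r x) = oscale r (f x)) /\
    (forall x y, f (lstar a x y) = lstar b (f x) (f y)).

End Octonions.

(* Main.v *)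
Require Import Defs.
From mathcomp Require Import all_boot all_order all_algebra.
From mathcomp Require Import reals ring lra.
Import Order.TTheory GRing.Theory Num.Theory.
Set Implicit Arguments. Unset Strict Implicit.
Local Open Scope ring_scope.

Ltac dest := repeat match goal with
 | x : oct _ |- _ => destruct x as [[? ? ? ?] [? ? ? ?]]
 | x : quat _ |- _ => destruct x as [? ? ? ?] end.
Ltac unf := unfold lstar, omul, oadd, oscale, oconj, qmul, qadd, qopp, qscale, qconj, onorm2, qnorm2, oRe in *; cbn [o1 o2 q0 q1 q2 q3] in *.

Section S.
Variable R : realType.
Implicit Types (x y z u a b c d : oct R) (p q : quat R).

Definition qzero : quat R := Quat 0 0 0 0.
Definition qone : quat R := Quat 1 0 0 0.
Definition ozero : oct R := Oct qzero qzero.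
Definition oone : oct R := Oct qone qzero.

Lemma oct_eq x y :
  q0 (o1 x) = q0 (o1 y) -> q1 (o1 x) = q1 (o1 y) -> q2 (o1 x) = q2 (o1 y) -> q3 (o1 x) = q3 (o1 y) ->
  q0 (o2 x) = q0 (o2 y) -> q1 (o2 x) = q1 (o2 y) -> q2 (o2 x) = q2 (o2 y) -> q3 (o2 x) = q3 (o2 y) -> x = y.
Proof. by case: x => [[????] [????]]; case: y => [[????] [????]] /= -> -> -> -> -> -> -> ->. Qed.

Ltac oring := dest; apply: oct_eq; rewrite /= ?/oRe ?/onorm2 ?/qnorm2 /=; ring.

Lemma ralt u b : omul (omul u b) b = omul u (omul b b).
Proof. oring. Qed.
Lemma ralt_conj u b : omul (omul u b) (oconj b) = oscale (onorm2 b) u.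
Proof. oring. Qed.
Lemma ralt_conj' u b : omul (omul u (oconj b)) b = oscale (onorm2 b) u.
Proof. oring. Qed.
Lemma conj_mul_self a : omul (oconj a) a = oscale (onorm2 a) oone.
Proof. oring. Qed.
Lemma mul_scale_one_l r y : omul (oscale r oone) y = oscale r y.
Proof. oring. Qed.
Lemma mul_one_r x : omul x oone = x.
Proof. oring. Qed.
Lemma mul_one_l x : omul oone x = x.
Proof. oring. Qed.
Lemma oscale1 x : oscale 1 x = x.
Proof. oring. Qed.
Lemma oscale0 x : oscale 0 x = ozero.
Proof. oring. Qed.
Lemma oconjK x : oconj (oconj x) = x.
Proof. oring. Qed.
Lemma mul_zero_l x : omul ozero x = ozero.
Proof. oring. Qed.
Lemma re_sq a : oRe (omul a a) = 2 * oRe a ^+ 2 - onorm2 a.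
Proof. dest; rewrite /= ?/oRe ?/onorm2 ?/qnorm2 /=; ring. Qed.
Lemma norm_mul x y : onorm2 (omul x y) = onorm2 x * onorm2 y.
Proof. dest; rewrite /= ?/oRe ?/onorm2 ?/qnorm2 /=; ring. Qed.

Lemma lc2 (k0 k1 : R) {G A0 A1 : R} : G = k0*A0 + k1*A1 -> A0 = 0 -> A1 = 0 -> G = 0.
Proof. by move=> -> -> ->; rewrite !mulr0 addr0. Qed.
Arguments lc2 k0 k1 {G A0 A1}.
Lemma lc8 (k0 k1 k2 k3 k4 k5 k6 k7 : R) {G A0 A1 A2 A3 A4 A5 A6 A7 : R} :
  G = k0*A0 + k1*A1 + k2*A2 + k3*A3 + k4*A4 + k5*A5 + k6*A6 + k7*A7 ->
  A0 = 0 -> A1 = 0 -> A2 = 0 -> A3 = 0 -> A4 = 0 -> A5 = 0 -> A6 = 0 -> A7 = 0 -> G = 0.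
Proof. by move=> -> -> -> -> -> -> -> -> ->; rewrite !mulr0 !addr0. Qed.
Arguments lc8 k0 k1 k2 k3 k4 k5 k6 k7 {G A0 A1 A2 A3 A4 A5 A6 A7}.

Definition Tm c x := omul (oconj x) c.
Definition Em c (s : R) x := oadd (Tm c (Tm c x)) (oadd (oscale (2*s) (Tm c x)) x).
Definition Wm c (s : R) x :=
  oadd (omul (oconj c) x) (oadd (oscale (2*s) (oconj x)) (omul x (oconj c))).

Lemma EW c s x : omul (Em c s x) (oconj c) =
  oadd (oscale (onorm2 c) (omul (oconj c) x))
       (oadd (oscale (2*s*onorm2 c) (oconj x)) (omul x (oconj c))).
Proof. rewrite /Em /Tm. oring. Qed.

Lemma W_of_E c s x : onorm2 c = 1 -> Em c s x = ozero -> Wm c s x = ozero.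
Proof.
move=> N E0; have := EW c s x; rewrite E0 mul_zero_l N mulr1 oscale1 => ->.
by rewrite /Wm.
Qed.

Lemma E_of_W c s x : onorm2 c = 1 -> Wm c s x = ozero -> Em c s x = ozero.
Proof.
move=> N W0; rewrite -[Em c s x]oscale1 -N -ralt_conj' EW N mulr1 oscale1.
by rewrite -/(Wm c s x) W0 mul_zero_l.
Qed.

Lemma W_kernel c s y : onorm2 c = 1 -> s != oRe c -> s ^+ 2 != 1 ->
  Wm c s y = ozero -> y = ozero.
Proof.
case: c => [[c0 c1 c2 c3] [c4 c5 c6 c7]]; case: y => [[y0 y1 y2 y3] [y4 y5 y6 y7]].
rewrite /onorm2 /qnorm2 /oRe /= => N hs hs2 W.
move: (congr1 (fun z => q0 (o1 z)) W) (congr1 (fun z => q1 (o1 z)) W)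
      (congr1 (fun z => q2 (o1 z)) W) (congr1 (fun z => q3 (o1 z)) W)
      (congr1 (fun z => q0 (o2 z)) W) (congr1 (fun z => q1 (o2 z)) W)
      (congr1 (fun z => q2 (o2 z)) W) (congr1 (fun z => q3 (o2 z)) W) => /=.
move=> e0 e1 e2 e3 e4 e5 e6 e7.
have h0 : 2 * y0 * (c0 ^+ 2 + c1 ^+ 2 + c2 ^+ 2 + c3 ^+ 2 + (c4 ^+ 2 + c5 ^+ 2 + c6 ^+ 2 + c7 ^+ 2) - s ^+ 2) = 0.
  apply: (lc8 (c0 - s) (- c1) (- c2) (- c3) (- c4) (- c5) (- c6) (- c7) _ e0 e1 e2 e3 e4 e5 e6 e7).
  ring.
have y00 : y0 = 0.
  have h1 : (1 - s ^+ 2) != 0 by rewrite subr_eq0 eq_sym.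
  move: h0; rewrite N; move/eqP; rewrite !mulf_eq0 (negbTE h1) pnatr_eq0 orbF /=.
  by move/eqP.
have hcs : c0 - s != 0 by rewrite subr_eq0 eq_sym.
have yk : forall (yk ck A : R), A = 2 * (c0 - s) * yk - 2 * y0 * ck -> A = 0 -> yk = 0.
  move=> yk ck A hA hA0.
  have : 2 * (c0 - s) * yk = 0.
    by apply: (lc2 1 (2 * ck) _ hA0 y00); rewrite hA; ring.
  by move/eqP; rewrite !mulf_eq0 pnatr_eq0 /= (negbTE hcs) /= => /eqP.
apply: oct_eq => /=; [exact: y00 | | | | | | | ].
- by apply: (yk _ c1 _ _ e1); ring.
- by apply: (yk _ c2 _ _ e2); ring.
- by apply: (yk _ c3 _ _ e3); ring.
- by apply: (yk _ c4 _ _ e4); ring.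
- by apply: (yk _ c5 _ _ e5); ring.
- by apply: (yk _ c6 _ _ e6); ring.
- by apply: (yk _ c7 _ _ e7); ring.
Qed.

Definition e1o : oct R := Oct (Quat 0 1 0 0) qzero.
Definition e2o : oct R := Oct (Quat 0 0 1 0) qzero.

Lemma W_exists c : exists x, x <> ozero /\ Wm c (oRe c) x = ozero.
Proof.
case: c => [[c0 c1 c2 c3] [c4 c5 c6 c7]].
case: (eqVneq c1 0) => h.
  exists e1o; split.
    by move/(congr1 (fun z => q1 (o1 z))) => /= /eqP; rewrite oner_eq0.
  rewrite h /Wm /oRe; apply: oct_eq; rewrite /=; ring.
exists (Oct (Quat 0 c2 (- c1) 0) qzero); split.
  move/(congr1 (fun z => q2 (o1 z))) => /= /eqP; rewrite oppr_eq0.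
  by apply/negP.
rewrite /Wm /oRe; apply: oct_eq; rewrite /=; ring.
Qed.

Definition isoP a b (f : oct R -> oct R) :=
  [/\ (forall x y, f (oadd x y) = oadd (f x) (f y)),
      (forall (r : R) x, f (oscale r x) = oscale r (f x)) &
      (forall x y, f (lstar a x y) = lstar b (f x) (f y))].

Lemma iso_inv a b f g : isoP a b f -> cancel f g -> cancel g f -> isoP b a g.
Proof.
case=> fadd fsc fl fg gf; split.
- by move=> x y; apply: (can_inj fg); rewrite gf fadd !gf.
- by move=> r x; apply: (can_inj fg); rewrite gf fsc !gf.
- by move=> x y; apply: (can_inj fg); rewrite gf fl !gf.
Qed.

Lemma iso_zero a b f : isoP a b f -> f ozero = ozero.
Proof. by case=> _ fsc _; rewrite -{1}(oscale0 ozero) fsc oscale0. Qed.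

Lemma lstar_id a y : onorm2 a = 1 -> lstar a a y = y.
Proof. by move=> N; rewrite /lstar conj_mul_self N mul_scale_one_l oscale1. Qed.

Lemma conj_inv z b : onorm2 b = 1 -> omul (oconj z) b = oone -> z = b.
Proof.
move=> N h; have := ralt_conj (oconj z) b; rewrite h N oscale1 mul_one_l => e.
by rewrite -(oconjK z) -e oconjK.
Qed.

Lemma iso_fa a b f g : onorm2 a = 1 -> onorm2 b = 1 -> isoP a b f -> cancel g f -> f a = b.
Proof.
move=> Na Nb [_ _ fl] gf.
have := fl a (g oone); rewrite lstar_id // gf /lstar mul_one_r => e.
by apply: conj_inv => //; rewrite -e.
Qed.

Lemma iso_T a b f x : isoP a b f -> f a = b ->
  f (Tm (omul a a) x) = Tm (omul b b) (f x).
Proof. by case=> _ _ fl fa; rewrite /Tm -!ralt -/(lstar a x a) fl fa. Qed.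

Lemma iso_E a b f s x : isoP a b f -> f a = b ->
  f (Em (omul a a) s x) = Em (omul b b) s (f x).
Proof.
move=> fi fa; have [fadd fsc _] := fi.
by rewrite /Em !fadd fsc !(@iso_T a b f _ fi fa).
Qed.

Lemma no_iso_gen a b f g : onorm2 a = 1 -> onorm2 b = 1 -> isoP a b f ->
  cancel f g -> cancel g f ->
  oRe (omul a a) != oRe (omul b b) -> oRe (omul a a) ^+ 2 != 1 -> False.
Proof.
move=> Na Nb fi fg gf hs hs2.
have Naa : onorm2 (omul a a) = 1 by rewrite norm_mul Na mulr1.
have Nbb : onorm2 (omul b b) = 1 by rewrite norm_mul Nb mulr1.
have [x [xnz Wx]] := @W_exists (omul a a).
have Ex := E_of_W Naa Wx.
have fa := iso_fa Na Nb fi gf.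
have := @iso_E a b f (oRe (omul a a)) x fi fa; rewrite Ex (iso_zero fi) => e.
have := W_of_E Nbb (esym e) => /(W_kernel Nbb hs hs2) fx0.
apply: xnz; apply: (can_inj fg); by rewrite fx0 (iso_zero fi).
Qed.

Lemma sq_re1 c : onorm2 c = 1 -> oRe c ^+ 2 = 1 -> c = oscale (oRe c) oone.
Proof.
case: c => [[c0 c1 c2 c3] [c4 c5 c6 c7]].
rewrite /onorm2 /qnorm2 /oRe /= => N H.
have s1 := sqr_ge0 c1; have s2 := sqr_ge0 c2; have s3 := sqr_ge0 c3;
have s4 := sqr_ge0 c4; have s5 := sqr_ge0 c5; have s6 := sqr_ge0 c6; have s7 := sqr_ge0 c7.
have z : forall t : R, t ^+ 2 = 0 -> t = 0 by move=> t /eqP; rewrite sqrf_eq0 => /eqP.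
have z1 : c1 = 0 by apply: z; lra.
have z2 : c2 = 0 by apply: z; lra.
have z3 : c3 = 0 by apply: z; lra.
have z4 : c4 = 0 by apply: z; lra.
have z5 : c5 = 0 by apply: z; lra.
have z6 : c6 = 0 by apply: z; lra.
have z7 : c7 = 0 by apply: z; lra.
subst; apply: oct_eq; rewrite /=; ring.
Qed.

Lemma real_of_conj z : oconj z = z -> z = oscale (oRe z) oone.
Proof.
case: z => [[z0 z1 z2 z3] [z4 z5 z6 z7]] /= e.
move: (congr1 (fun z => q1 (o1 z)) e) (congr1 (fun z => q2 (o1 z)) e)
      (congr1 (fun z => q3 (o1 z)) e) (congr1 (fun z => q0 (o2 z)) e)
      (congr1 (fun z => q1 (o2 z)) e) (congr1 (fun z => q2 (o2 z)) e)
      (congr1 (fun z => q3 (o2 z)) e) => /= e1 e2 e3 e4 e5 e6 e7.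
rewrite /oRe; apply: oct_eq; rewrite /=; lra.
Qed.

Lemma caseiii a b f g : onorm2 a = 1 -> onorm2 b = 1 -> isoP a b f ->
  cancel f g -> cancel g f ->
  oRe (omul a a) = 1 -> oRe (omul b b) = -1 -> False.
Proof.
move=> Na Nb fi fg gf ha hb.
have Naa : onorm2 (omul a a) = 1 by rewrite norm_mul Na mulr1.
have Nbb : onorm2 (omul b b) = 1 by rewrite norm_mul Nb mulr1.
have ca : omul a a = oone.
  by rewrite (sq_re1 Naa) ha ?expr1n // oscale1.
have cb : omul b b = oscale (-1) oone.
  by rewrite (sq_re1 Nbb) hb // sqrrN expr1n.
have gi := iso_inv fi fg gf.
have gb := iso_fa Nb Na gi fg.
have key : forall e, Tm (omul b b) e = e -> f (oscale (oRe (g e)) oone) = e.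
  move=> e he; rewrite -(real_of_conj (z := g e)) ?gf //.
  by rewrite -{2}he (@iso_T b a g _ gi gb) ca /Tm mul_one_r.
have h1 := key e1o ltac:(rewrite cb /Tm /e1o; apply: oct_eq; rewrite /=; ring).
have h2 := key e2o ltac:(rewrite cb /Tm /e2o; apply: oct_eq; rewrite /=; ring).
have [_ fsc _] := fi.
rewrite fsc in h1; rewrite fsc in h2.
move: (congr1 (fun z => q1 (o1 z)) h1) (congr1 (fun z => q2 (o1 z)) h1)
      (congr1 (fun z => q1 (o1 z)) h2) (congr1 (fun z => q2 (o1 z)) h2) => /=.
set t1 := oRe (g e1o); set t2 := oRe (g e2o).
set F1 := q1 (o1 (f oone)); set F2 := q2 (o1 (f oone)).
move=> a1 a2 b1 b2.
have : (t1 * F1) * (t2 * F2) = (t1 * F2) * (t2 * F1) by ring.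
by rewrite a1 a2 b1 b2 mul0r mulr1 => /eqP; rewrite oner_eq0.
Qed.

Lemma forward a b : onorm2 a = 1 -> onorm2 b = 1 -> lstar_isomorphic a b ->
  `|oRe a| = `|oRe b|.
Proof.
move=> Na Nb [f [[g fg gf] [fadd [fsc fl]]]].
have fi : isoP a b f by split.
have gi := iso_inv fi fg gf.
case: (eqVneq `|oRe a| `|oRe b|) => // hne; exfalso.
have hsq : oRe a ^+ 2 != oRe b ^+ 2.
  by apply: contra hne => /eqP h; rewrite -!sqrtr_sqr h.
have hc : oRe (omul a a) != oRe (omul b b).
  rewrite !re_sq Na Nb; apply: contra hsq => /eqP h; apply/eqP; lra.
case: (eqVneq (oRe (omul a a) ^+ 2) 1) => h1; last first.
  exact: (no_iso_gen Na Nb fi fg gf hc h1).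
case: (eqVneq (oRe (omul b b) ^+ 2) 1) => h2; last first.
  by apply: (no_iso_gen Nb Na gi gf fg _ h2); rewrite eq_sym.
move: h1 h2 => /eqP; rewrite sqrf_eq1 => /orP [] /eqP h1 /eqP; rewrite sqrf_eq1 => /orP [] /eqP h2.
- by move: hc; rewrite h1 h2 eqxx.
- exact: (caseiii Na Nb fi fg gf h1 h2).
- exact: (caseiii Nb Na gi gf fg h2 h1).
- by move: hc; rewrite h1 h2 eqxx.
Qed.

Record good (phi : oct R -> oct R) : Prop := Good {
  g_add : forall x y, phi (oadd x y) = oadd (phi x) (phi y);
  g_sc : forall (t : R) x, phi (oscale t x) = oscale t (phi x);
  g_mul : forall x y, phi (omul x y) = omul (phi x) (phi y);
  g_conj : forall x, phi (oconj x) = oconj (phi x);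
  g_one : phi oone = oone;
  g_norm : forall x, onorm2 (phi x) = onorm2 x;
  g_bij : bijective phi }.

Lemma good_id : good id.
Proof. by split => //; exists id. Qed.

Lemma good_comp phi psi : good phi -> good psi -> good (psi \o phi).
Proof.
case=> a1 s1 m1 c1 o1' n1 b1 [a2 s2 m2 c2 o2' n2 b2]; split => /=.
- by move=> x y; rewrite a1 a2.
- by move=> t x; rewrite s1 s2.
- by move=> x y; rewrite m1 m2.
- by move=> x; rewrite c1 c2.
- by rewrite o1' o2'.
- by move=> x; rewrite n2 n1.
- exact: bij_comp.
Qed.

Lemma good_inv phi : good phi -> exists psi, good psi /\ cancel phi psi.
Proof.
case=> a1 s1 m1 c1 o1' n1 [psi fg gf]; exists psi; split; last exact: fg; split.
- by move=> x y; apply: (can_inj fg); rewrite gf a1 !gf.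
- by move=> t x; apply: (can_inj fg); rewrite gf s1 !gf.
- by move=> x y; apply: (can_inj fg); rewrite gf m1 !gf.
- by move=> x; apply: (can_inj fg); rewrite gf c1 !gf.
- by apply: (can_inj fg); rewrite gf o1'.
- by move=> x; rewrite -{2}(gf x) n1.
- by exists phi.
Qed.

Lemma good_iso phi a b : good phi -> phi a = b -> lstar_isomorphic a b.
Proof.
case=> a1 s1 m1 c1 _ _ bij fa; exists phi; split => //; split => //; split => //.
by move=> x y; rewrite /lstar !m1 c1 fa.
Qed.

Lemma oadd_zero x : oadd x (Oct qzero qzero) = x.
Proof. oring. Qed.
Lemma qscale0 q : qscale 0 q = qzero.
Proof. case: q => ????; rewrite /qscale /qzero; congr Quat; ring. Qed.
Lemma qscale1 q : qscale 1 q = q.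
Proof. by case: q => ????; rewrite /qscale /= !mul1r. Qed.
Lemma oscaleA (t u : R) x : oscale t (oscale u x) = oscale (t * u) x.
Proof. oring. Qed.

Definition beta (s : quat R) x := Oct (o1 x) (qmul s (o2 x)).

Lemma beta_mul s x y : omul (beta s x) (beta s y) =
  oadd (beta s (omul x y)) (Oct (qscale (1 - qnorm2 s) (qmul (qconj (o2 y)) (o2 x))) qzero).
Proof. rewrite /beta; oring. Qed.
Lemma beta_inv s x : beta (qconj s) (beta s x) = oadd x (Oct qzero (qscale (qnorm2 s - 1) (o2 x))).
Proof. rewrite /beta; oring. Qed.
Lemma beta_inv' s x : beta s (beta (qconj s) x) = oadd x (Oct qzero (qscale (qnorm2 s - 1) (o2 x))).
Proof. rewrite /beta; oring. Qed.
Lemma beta_norm s x : onorm2 (beta s x) = onorm2 x + (qnorm2 s - 1) * qnorm2 (o2 x).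
Proof. rewrite /beta; dest; rewrite /= /onorm2 /qnorm2 /=; ring. Qed.

Lemma good_beta s : qnorm2 s = 1 -> good (beta s).
Proof.
move=> N; split.
- move=> x y; rewrite /beta; oring.
- move=> t x; rewrite /beta; oring.
- by move=> x y; rewrite beta_mul N subrr qscale0 oadd_zero.
- move=> x; rewrite /beta; oring.
- rewrite /beta; oring.
- by move=> x; rewrite beta_norm N subrr mul0r addr0.
- exists (beta (qconj s)) => x.
    by rewrite beta_inv N subrr qscale0 oadd_zero.
  by rewrite beta_inv' N subrr qscale0 oadd_zero.
Qed.

Definition chi' (r : quat R) x :=
  Oct (qmul (qmul r (o1 x)) (qconj r)) (qmul (qmul r (o2 x)) (qconj r)).
Definition chi (r : quat R) x := oscale (qnorm2 r)^-1 (chi' r x).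

Lemma chi'_mul r x y : omul (chi' r x) (chi' r y) = oscale (qnorm2 r) (chi' r (omul x y)).
Proof. rewrite /chi'; oring. Qed.
Lemma omul_sc (t u : R) x y : omul (oscale t x) (oscale u y) = oscale (t * u) (omul x y).
Proof. oring. Qed.
Lemma chi'_conj r x : chi' r (oconj x) = oconj (chi' r x).
Proof. rewrite /chi'; oring. Qed.
Lemma chi'_add r x y : chi' r (oadd x y) = oadd (chi' r x) (chi' r y).
Proof. rewrite /chi'; oring. Qed.
Lemma chi'_sc r t x : chi' r (oscale t x) = oscale t (chi' r x).
Proof. rewrite /chi'; oring. Qed.
Lemma chi'_one r : chi' r oone = oscale (qnorm2 r) oone.
Proof. rewrite /chi'; oring. Qed.
Lemma chi'_norm r x : onorm2 (chi' r x) = qnorm2 r ^+ 2 * onorm2 x.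
Proof. rewrite /chi'; dest; rewrite /= /onorm2 /qnorm2 /=; ring. Qed.
Lemma onorm2_sc t x : onorm2 (oscale t x) = t ^+ 2 * onorm2 x.
Proof. dest; rewrite ?/im ?/oRe /= /onorm2 /qnorm2 /=; ring. Qed.
Lemma chi'_inv r x : chi' (qconj r) (chi' r x) = oscale (qnorm2 r ^+ 2) x.
Proof. rewrite /chi'; oring. Qed.
Lemma chi'_inv' r x : chi' r (chi' (qconj r) x) = oscale (qnorm2 r ^+ 2) x.
Proof. rewrite /chi'; oring. Qed.
Lemma oconj_sc t x : oconj (oscale t x) = oscale t (oconj x).
Proof. oring. Qed.
Lemma oadd_sc t x y : oscale t (oadd x y) = oadd (oscale t x) (oscale t y).
Proof. oring. Qed.
Lemma qnorm2_conj (r : quat R) : qnorm2 (qconj r) = qnorm2 r.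
Proof. case: r => ????; rewrite /qnorm2 /=; ring. Qed.

Lemma good_chi r : qnorm2 r != 0 -> good (chi r).
Proof.
move=> N; rewrite /chi; split.
- by move=> x y; rewrite chi'_add oadd_sc.
- by move=> t x; rewrite chi'_sc !oscaleA mulrC.
- move=> x y; rewrite omul_sc chi'_mul oscaleA; congr oscale; field; exact: N.
- by move=> x; rewrite chi'_conj oconj_sc.
- by rewrite chi'_one oscaleA mulVf // oscale1.
- move=> x; rewrite onorm2_sc chi'_norm mulrA -exprMn mulVf // expr1n mul1r //.
- exists (chi (qconj r)) => x; rewrite /chi ?chi'_sc ?chi'_inv ?chi'_inv' !oscaleA qnorm2_conj;
  rewrite -[X in _ = X]oscale1; congr oscale; field; exact: N.
Qed.

Definition sig x := Oct (Quat (q0 (o1 x)) (q2 (o1 x)) (q1 (o2 x)) (q3 (o2 x)))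
                        (Quat (q1 (o1 x)) (- q3 (o1 x)) (q0 (o2 x)) (- q2 (o2 x))).
Definition sigi y := Oct (Quat (q0 (o1 y)) (q0 (o2 y)) (q1 (o1 y)) (- q1 (o2 y)))
                         (Quat (q2 (o2 y)) (q2 (o1 y)) (- q3 (o2 y)) (q3 (o1 y))).

Lemma good_sig : good sig.
Proof.
rewrite /sig; split.
- move=> x y; oring.
- move=> t x; oring.
- move=> x y; oring.
- move=> x; oring.
- oring.
- move=> x; dest; rewrite /= /onorm2 /qnorm2 /=; ring.
- exists sigi => x; rewrite /sigi; oring.
Qed.

Lemma qnorm2_ge0 q : 0 <= qnorm2 q.
Proof. by case: q => ????; rewrite /qnorm2 /= !addr_ge0 ?sqr_ge0. Qed.

Lemma qnorm2_eq0 q : qnorm2 q = 0 -> q = qzero.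
Proof.
case: q => c0 c1 c2 c3; rewrite /qnorm2 /= => N.
have s0 := sqr_ge0 c0; have s1 := sqr_ge0 c1; have s2 := sqr_ge0 c2; have s3 := sqr_ge0 c3.
have z : forall t : R, t ^+ 2 = 0 -> t = 0 by move=> t /eqP; rewrite sqrf_eq0 => /eqP.
have z0 : c0 = 0 by apply: z; lra.
have z1 : c1 = 0 by apply: z; lra.
have z2 : c2 = 0 by apply: z; lra.
have z3 : c3 = 0 by apply: z; lra.
by subst.
Qed.

Lemma qnorm2_sc (k : R) q : qnorm2 (qscale k q) = k ^+ 2 * qnorm2 q.
Proof. case: q => ????; rewrite /qnorm2 /=; ring. Qed.

Lemma qmul_conj_sc (k : R) q : qmul (qscale k (qconj q)) q = Quat (k * qnorm2 q) 0 0 0.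
Proof. case: q => ????; rewrite /qmul /qscale /qconj /qnorm2 /=; congr Quat; ring. Qed.

Lemma step_beta p q : exists phi, good phi /\
  phi (Oct p q) = Oct p (Quat (Num.sqrt (qnorm2 q)) 0 0 0).
Proof.
case: (eqVneq (qnorm2 q) 0) => hN.
  exists id; split; first exact: good_id.
  by rewrite hN sqrtr0 (qnorm2_eq0 hN).
have Npos : 0 < qnorm2 q by rewrite lt_def hN qnorm2_ge0.
set n := Num.sqrt (qnorm2 q).
have npos : 0 < n by rewrite sqrtr_gt0.
have n2 : n ^+ 2 = qnorm2 q by rewrite sqr_sqrtr // ltW.
have nn0 : n != 0 by rewrite gt_eqF.
set s := qscale n^-1 (qconj q).
have Ns : qnorm2 s = 1.
  by rewrite qnorm2_sc qnorm2_conj -n2 exprVn mulVf // expf_neq0.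
exists (beta s); split; first exact: good_beta.
rewrite /beta /=; congr Oct.
have -> : qmul s q = Quat (n^-1 * qnorm2 q) 0 0 0.
  by rewrite /s qmul_conj_sc.
by rewrite -n2; congr Quat; field.
Qed.

Lemma step_chi p t : q0 p = 0 -> exists phi, good phi /\ exists m,
  phi (Oct p (Quat t 0 0 0)) = Oct (Quat 0 m 0 0) (Quat t 0 0 0).
Proof.
case: p => p0 p1 p2 p3 /= ->.
set m := Num.sqrt (p1 ^+ 2 + p2 ^+ 2 + p3 ^+ 2).
have hm : m ^+ 2 = p1 ^+ 2 + p2 ^+ 2 + p3 ^+ 2.
  by rewrite sqr_sqrtr // !addr_ge0 ?sqr_ge0.
set r := Quat (m + p1) 0 p3 (- p2).
case: (eqVneq (qnorm2 r) 0) => hr.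
  have := qnorm2_eq0 hr; rewrite /r /qzero => - [] h1 h3 h2.
  have hp1 : p1 = - m by apply/eqP; rewrite -addr_eq0 addrC h1.
  have hp2 : p2 = 0 by rewrite -[p2]opprK h2 oppr0.
  set j : quat R := Quat 0 0 1 0.
  have Nj : qnorm2 j = 1 by rewrite /qnorm2 /=; ring.
  exists (chi j); split; first by apply: good_chi; rewrite Nj oner_eq0.
  exists m; rewrite /chi Nj invr1 oscale1 /chi' hp1 hp2 h3.
  by apply: oct_eq; rewrite /=; ring.
exists (chi r); split; first exact: good_chi.
exists m.
have L : chi' r (Oct (Quat 0 p1 p2 p3) (Quat t 0 0 0)) =
  Oct (qadd (Quat 0 (m * qnorm2 r) 0 0)
            (qscale (p1 ^+ 2 + p2 ^+ 2 + p3 ^+ 2 - m ^+ 2) (qmul (Quat 0 1 0 0) (qconj r))))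
      (Quat (t * qnorm2 r) 0 0 0).
  by rewrite /chi' /r /qnorm2; apply: oct_eq; rewrite /=; ring.
rewrite /chi L -hm subrr qscale0.
apply: oct_eq; rewrite /=; field; exact: hr.
Qed.

Lemma step_sig (m t : R) : sig (Oct (Quat 0 m 0 0) (Quat t 0 0 0)) = Oct qzero (Quat m 0 t 0).
Proof. by rewrite /sig /qzero /= oppr0. Qed.

Lemma canon u : q0 (o1 u) = 0 -> exists phi, good phi /\ exists n,
  0 <= n /\ phi u = Oct qzero (Quat n 0 0 0).
Proof.
case: u => p q /= hp.
have [f1 [g1 e1]] := @step_beta p q.
have [f2 [g2 [m e2]]] := @step_chi p (Num.sqrt (qnorm2 q)) hp.
have [f4 [g4 e4]] := @step_beta qzero (Quat m 0 (Num.sqrt (qnorm2 q)) 0).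
exists (f4 \o sig \o f2 \o f1); split.
  by apply: good_comp g4; apply: good_comp good_sig; apply: good_comp g1 g2.
exists (Num.sqrt (qnorm2 (Quat m 0 (Num.sqrt (qnorm2 q)) 0))); split; first exact: sqrtr_ge0.
by rewrite /= e1 e2 step_sig e4.
Qed.

Definition im a := Oct (Quat 0 (q1 (o1 a)) (q2 (o1 a)) (q3 (o1 a))) (o2 a).
Lemma decomp a : a = oadd (oscale (oRe a) oone) (im a).
Proof. rewrite /im; oring. Qed.
Lemma norm_im a : onorm2 (im a) = onorm2 a - oRe a ^+ 2.
Proof. dest; rewrite ?/im ?/oRe /= /onorm2 /qnorm2 /=; ring. Qed.
Lemma canon_norm (n : R) : onorm2 (Oct qzero (Quat n 0 0 0)) = n ^+ 2.
Proof. rewrite /onorm2 /qnorm2 /=; ring. Qed.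

Lemma same_re a b : onorm2 a = onorm2 b -> oRe a = oRe b -> lstar_isomorphic a b.
Proof.
move=> hN hR.
have [fa [ga [na [na0 ea]]]] := @canon (im a) erefl.
have [fb [gb [nb [nb0 eb]]]] := @canon (im b) erefl.
have nab : na = nb.
  have h : na ^+ 2 = nb ^+ 2.
    by rewrite -!canon_norm -ea -eb (g_norm ga) (g_norm gb) !norm_im hN hR.
  by rewrite -(ger0_norm na0) -(ger0_norm nb0) -!sqrtr_sqr h.
have [psi [gpsi cpsi]] := good_inv gb.
apply: (good_iso (good_comp ga gpsi)).
rewrite /= {1}(decomp a) (g_add ga) (g_sc ga) (g_one ga) ea nab -eb.
by rewrite (g_add gpsi) (g_sc gpsi) (g_one gpsi) cpsi hR -decomp.
Qed.

Lemma neg_iso a : lstar_isomorphic a (oscale (-1) a).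
Proof.
exists (oscale (-1)); split.
  by exists (oscale (-1)) => x; rewrite oscaleA mulrNN mulr1 oscale1.
split; first by move=> x y; rewrite oadd_sc.
split; first by move=> t x; rewrite !oscaleA mulrC.
move=> x y; rewrite /lstar; oring.
Qed.

Lemma iso_trans a b c : lstar_isomorphic a b -> lstar_isomorphic b c -> lstar_isomorphic a c.
Proof.
move=> [f [bf [af [sf lf]]]] [g [bg [ag [sg lg]]]].
exists (g \o f); split; first exact: bij_comp.
split; first by move=> x y /=; rewrite af ag.
split; first by move=> t x /=; rewrite sf sg.
by move=> x y /=; rewrite lf lg.
Qed.

Lemma backward a b : onorm2 a = 1 -> onorm2 b = 1 -> `|oRe a| = `|oRe b| ->
  lstar_isomorphic a b.
Proof.
move=> Na Nb h.
have : oRe a ^+ 2 = oRe b ^+ 2 by rewrite -(real_normK (num_real (oRe a))) -(real_normK (num_real (oRe b))) h.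
move/eqP; rewrite eqf_sqr => /orP [] /eqP e.
  by apply: same_re => //; rewrite Na Nb.
apply: iso_trans (neg_iso a) _; apply: same_re.
  by rewrite onorm2_sc sqrrN expr1n mul1r Na Nb.
by move: e; rewrite /oRe /= => ->; rewrite mulN1r opprK.
Qed.
End S.

Theorem corollary1 (R : realType) (a b : oct R) :
  onorm2 a = 1 -> onorm2 b = 1 ->
  (lstar_isomorphic a b <-> `|oRe a| = `|oRe b|).
Proof.
move=> Na Nb; split; first exact: forward.
exact: backward.
Qed.
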